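(* The projection $\mathbf F^1\to\mathbf T$ is birational onto its image.
   Context: Over $\mathbb C$, $V=H^0\mathcal O_{\mathbb P^3}(1)$, $\check V$ its dual, $R$ and $W$ vector spaces of dimensions $3$ and $4$, $\mathbf T=\mathbb P(\mathrm{Hom}(R\otimes V,W))$. $\mathbf F^1\subset\mathbf T\times\mathbb P(\mathrm{Hom}(W,\check V))$ is the locally closed subset of pairs $(\varphi,\psi)$ with $\psi$ of rank $1$ such that the composite $R\otimes V\otimes V\xrightarrow{\varphi\otimes1}W\otimes V\xrightarrow{\psi\otimes1}\check V\otimes V\to\mathbb C$ factors through $R\otimes S^2V$. *)

(* Defs.v *)
From mathcomp Require Import all_boot all_algebra.
From mathcomp Require Import mpoly.
From mathcomp Require Import complex.
From mathcomp Require Import Rstruct.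

Set Implicit Arguments.
Unset Strict Implicit.
Unset Printing Implicit Defensive.
Import GRing.Theory.
Local Open Scope ring_scope.

Definition CC : fieldType := complex.complex Rdefinitions.R.

(* Bases: R has basis indexed by 'I_3, V by 'I_4 (and check V by the dual
   basis), W by 'I_4. *)
(* A point of Hom(R (x) V, W) (affine cone over T):
   phi ((r, v), w) = w-th coordinate of phi(e_r (x) e_v). *)
Definition TIdx : finType := (('I_3 * 'I_4) * 'I_4)%type.
(* A point of Hom(W, check V):
   psi (w, v') = v'-th coordinate (dual basis) of psi(f_w). *)
Definition PIdx : finType := ('I_4 * 'I_4)%type.

Definition TPoint := TIdx -> CC.
Definition PPoint := PIdx -> CC.

Definition psi_mx (psi : PPoint) : 'M[CC]_4 := \matrix_(w < 4, v < 4) psi (w, v).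

(* The composite  R (x) V (x) V -> W (x) V -> check V (x) V -> C
   evaluated at e_r (x) e_v (x) e_v'. *)
Definition composite (phi : TPoint) (psi : PPoint) (r : 'I_3) (v v' : 'I_4) : CC :=
  \sum_(w < 4) phi ((r, v), w) * psi (w, v').

(* It factors through R (x) S^2 V iff it is symmetric in the two V slots. *)
Definition factors_through_RS2V (phi : TPoint) (psi : PPoint) : Prop :=
  forall (r : 'I_3) (v v' : 'I_4), composite phi psi r v v' = composite phi psi r v' v.

(* Affine cone over F^1 inside Hom(R(x)V,W) x Hom(W, check V):
   phi nonzero (a point of T), psi of rank 1, and the factorisation condition.
   All conditions are invariant under independent rescaling of phi and psi,
   so this is exactly the (bi-)cone over F^1 (minus the zero slices). *)
Definition F1cone (phi : TPoint) (psi : PPoint) : Prop :=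
  (exists t, phi t != 0) /\ \rank (psi_mx psi) = 1%N /\ factors_through_RS2V phi psi.

Definition PairIdx : finType := (TIdx + PIdx)%type.

Definition evT (phi : TPoint) : 'I_#|TIdx| -> CC := fun i => phi (enum_val i).

Definition evTP (phi : TPoint) (psi : PPoint) : 'I_#|PairIdx| -> CC :=
  fun i => match enum_val i with inl t => phi t | inr p => psi p end.

Definition homog_of_deg (n : nat) (d : nat) (p : {mpoly CC[n]}) : bool :=
  all (fun m => mdeg m == d) (msupp p).

(* For bi-cones this is the same as Zariski
   density of the corresponding subsets of P(Hom(R(x)V,W)) x P(Hom(W,check V)). *)
Definition zdense (U F : TPoint -> PPoint -> Prop) : Prop :=
  forall P : {mpoly CC[#|PairIdx|]},
    (forall phi psi, U phi psi -> meval (evTP phi psi) P = 0) ->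
    forall phi psi, F phi psi -> meval (evTP phi psi) P = 0.

(* The projection (phi,psi) |-> phi, restricted to the (cone over the) locally
   closed set F, is birational onto its image: there is a rational map from
   the image back to F, inverse to the projection on a dense open subset. *)
Definition proj_birational_onto_image (F : TPoint -> PPoint -> Prop) : Prop :=
  exists (k : nat) (h : 'I_k -> {mpoly CC[#|TIdx|]}) (d e : 'I_k -> nat)
         (G : 'I_k -> PIdx -> {mpoly CC[#|TIdx|]}),
    (forall i, homog_of_deg (d i) (h i)) /\
    (forall i p, homog_of_deg (e i) (G i p)) /\
    (forall i phi psi, F phi psi -> meval (evT phi) (h i) != 0 ->
       exists c : CC, c != 0 /\ forall p, psi p = c * meval (evT phi) (G i p)) /\
    zdense (fun phi psi => F phi psi /\ exists i, meval (evT phi) (h i) != 0) F.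

(* Main.v *)
Require Import Defs.
From mathcomp Require Import all_boot all_algebra.
From mathcomp Require Import mpoly complex Rstruct.
From mathcomp Require Import ring fingroup perm.
Set Implicit Arguments.
Unset Strict Implicit.
Unset Printing Implicit Defensive.
Import GRing.Theory Num.Theory.
Local Open Scope ring_scope.
Section Gen.
Variable S : comRingType.
Variable n : nat.
Definition Bf (A0 A : 'M[S]_n) := A *m \adj A0.
Definition Cf (A0 A1 A2 : 'M[S]_n) := Bf A0 A1 *m Bf A0 A2 - Bf A0 A2 *m Bf A0 A1.
Definition kf (A0 A1 A2 : 'M[S]_n) (j : 'I_n) : 'cV[S]_n :=
  \adj (Cf A0 A1 A2) *m delta_mx j 0.
Definition hf (A0 A1 A2 : 'M[S]_n) (i j : 'I_n) : S := \det A0 * \adj (Cf A0 A1 A2) i j.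
Definition Gf (A0 A1 A2 : 'M[S]_n) (j : 'I_n) (w v : 'I_n) : S :=
  (\adj A0 *m kf A0 A1 A2 j) w 0 * kf A0 A1 A2 j v 0.
End Gen.

Section Chart.
Variable F : fieldType.
Variable n : nat.
Implicit Types (a b : 'cV[F]_n).

Lemma delta_mul (j i : 'I_n) b : (delta_mx j i : 'M[F]_n) *m b = b i 0 *: delta_mx j 0.
Proof.
apply/matrixP => x y; rewrite !mxE (bigD1 i) //= big1 ?addr0.
  by rewrite !mxE eqxx andbT [y]ord1 eqxx andbT mulrC mulr_natr mulrb.
by move=> l /negPf nli; rewrite mxE nli andbF mul0r.
Qed.

Lemma kf_entry (A0 A1 A2 : 'M[F]_n) j w : kf A0 A1 A2 j w 0 = \adj (Cf A0 A1 A2) w j.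
Proof.
rewrite /kf mxE (bigD1 j) //= big1 ?addr0.
  by rewrite [delta_mx _ _ _ _]mxE !eqxx mulr1.
by move=> l /negPf nlj; rewrite [delta_mx _ _ _ _]mxE nlj mulr0.
Qed.

Lemma det_plus_delta (C : 'M[F]_n) (i j : 'I_n) :
  \det (C + delta_mx j i) = \det C + \adj C i j.
Proof.
rewrite (expand_det_row _ j) (expand_det_row C j).
have cof l : cofactor (C + delta_mx j i) j l = cofactor C j l.
  rewrite /cofactor; congr (_ * \det _); apply/matrixP => x y.
  by rewrite !mxE eq_sym (negPf (neq_lift _ _)) andFb addr0.
under eq_bigr do rewrite cof !mxE eqxx andTb mulrDl.
rewrite big_split /= -(expand_det_row C j) (bigD1 i) //= big1 ?addr0.
  by rewrite eqxx mul1r mxE.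
by move=> l /negPf nli; rewrite nli mul0r.
Qed.

Lemma chart (A0 A1 A2 : 'M[F]_n) a b l0 l1 l2 (i j : 'I_n) :
  a != 0 -> b != 0 -> A0 *m a = l0 *: b -> A1 *m a = l1 *: b -> A2 *m a = l2 *: b ->
  hf A0 A1 A2 i j != 0 ->
  exists c, c != 0 /\ forall w v, (a *m b^T) w v = c * Gf A0 A1 A2 j w v.
Proof.
move=> an0 bn0 e0 e1 e2; rewrite /hf mulf_eq0 negb_or => /andP[dn0 kn0].
set d := \det A0 in dn0.
have uA0 : A0 \in unitmx by rewrite unitmxE unitfE.
have l0n0 : l0 != 0.
  apply: contraNneq an0 => l00; move: e0; rewrite l00 scale0r => e0.
  by rewrite -(mulKmx uA0 a) e0 mulmx0.
have eb : \adj A0 *m b = (d / l0) *: a.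
  have := congr1 (mulmx (\adj A0)) e0.
  rewrite mulmxA mul_adj_mx mul_scalar_mx -scalemxAr => E.
  by rewrite -[LHS](scalerK l0n0) -E scalerA mulrC.
have eB (A : 'M[F]_n) l : A *m a = l *: b -> Bf A0 A *m b = (d / l0 * l) *: b.
  by move=> eA; rewrite /Bf -mulmxA eb -scalemxAr eA scalerA.
set C := Cf A0 A1 A2.
have Cb : C *m b = 0.
  have eB1 := eB _ _ e1; have eB2 := eB _ _ e2.
  rewrite /C /Cf mulmxBl -mulmxA eB2 -scalemxAr eB1 -mulmxA eB1 -scalemxAr eB2 !scalerA.
  by rewrite mulrC subrr.
have dC : \det C = 0.
  apply/eqP; apply: contraNT bn0 => dC.
  have uC : C \in unitmx by rewrite unitmxE unitfE.
  by rewrite -(mulKmx uC b) Cb mulmx0.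
set k := kf A0 A1 A2 j.
have Ck : C *m k = 0.
  by rewrite /k /kf mulmxA mul_mx_adj dC mul_scalar_mx scale0r.
set D := C + delta_mx j i.
have uD : D \in unitmx by rewrite unitmxE unitfE /D det_plus_delta dC add0r.
set kap := \adj C i j.
have Db : D *m b = b i 0 *: delta_mx j 0 by rewrite /D mulmxDl Cb add0r delta_mul.
have Dk : D *m k = kap *: delta_mx j 0.
  by rewrite /D mulmxDl Ck add0r delta_mul /k kf_entry.
have ez : kap *: b = b i 0 *: k.
  apply/eqP; rewrite -subr_eq0; apply/eqP.
  rewrite -(mulKmx uD (_ - _)) mulmxBr -!scalemxAr Db Dk !scalerA mulrC subrr.
  by rewrite mulmx0.
have bin0 : b i 0 != 0.
  apply: contraNneq bn0 => bi0; move: ez; rewrite bi0 scale0r => /eqP.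
  by rewrite scaler_eq0 (negPf (kn0 : kap != 0)).
have kn0' : kap != 0 := kn0.
have eb2 : b = (b i 0 / kap) *: k.
  by rewrite -[LHS](scalerK kn0') ez scalerA mulrC.
have ea : a = (l0 / d * (b i 0 / kap)) *: (\adj A0 *m k).
  rewrite -scalerA scalemxAr -eb2 eb scalerA.
  by rewrite mulrA divfK // mulrC mulVf // scale1r.
exists (l0 / d * (b i 0 / kap) * (b i 0 / kap)); split.
  by rewrite !mulf_neq0 ?invr_eq0.
have E : a *m b^T = (l0 / d * (b i 0 / kap) * (b i 0 / kap)) *: ((\adj A0 *m k) *m k^T).
  rewrite [a in a *m _]ea [b in _ *m b^T]eb2 linearZ /= -scalemxAl.
  by rewrite -scalemxAr scalerA.
move=> w v; rewrite E mxE /Gf -/k mxE big_ord1 mxE.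
by rewrite mxE.
Qed.
End Chart.
Section Adj.
Variable F : fieldType.

Lemma adjM n (A B : 'M[F]_n) : \adj (A *m B) = \adj B *m \adj A.
Proof.
pose At := char_poly_mx A; pose Bt := char_poly_mx B.
have dA : \det At != 0 by rewrite -/(char_poly A) monic_neq0 // char_poly_monic.
have dB : \det Bt != 0 by rewrite -/(char_poly B) monic_neq0 // char_poly_monic.
have key : \adj (At *m Bt) = \adj Bt *m \adj At.
  have E : (At *m Bt) *m (\adj (At *m Bt) - \adj Bt *m \adj At) = 0.
    rewrite mulmxBr mul_mx_adj mulmxA -(mulmxA At) mul_mx_adj.
    rewrite mul_mx_scalar -scalemxAl mul_mx_adj det_mulmx.
    by rewrite scale_scalar_mx mulrC subrr.
  have := congr1 (mulmx (\adj (At *m Bt))) E.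
  rewrite mulmx0 mulmxA mul_adj_mx mul_scalar_mx => /eqP.
  rewrite scalemx_eq0 det_mulmx mulf_eq0 (negPf dA) (negPf dB) /= subr_eq0.
  by move/eqP.
have := congr1 (map_mx (horner_eval 0)) key.
rewrite map_mxM !map_mx_adj map_mxM.
have ev C : map_mx (horner_eval 0) (char_poly_mx C) = - C :> 'M[F]_n.
  apply/matrixP => i j; rewrite !mxE /horner_eval.
  by rewrite hornerD hornerN hornerMn hornerX hornerC mul0rn add0r.
rewrite !ev mulNmx mulmxN opprK -!scaleN1r !adjZ => E.
by rewrite E -scalemxAl -scalemxAr scalerA -exprMn mulrN1 opprK expr1n scale1r.
Qed.
End Adj.
Section Lin.
Variable F : fieldType.
Variable n : nat.

Lemma nz_entry (m : nat) (b : 'M[F]_(n, m)) : b != 0 -> exists i j, b i j != 0.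
Proof.
move=> bn0; case: (pickP (fun ij : 'I_n * 'I_m => b ij.1 ij.2 != 0)) => [[i j] H|H].
  by exists i, j.
case/negP: bn0; apply/eqP/matrixP => i j; rewrite mxE.
by have := H (i, j) => /= /negbFE/eqP.
Qed.

Lemma sym_prop (M : 'M[F]_n) (a b : 'cV[F]_n) :
  b != 0 -> (forall v v', (M *m (a *m b^T)) v v' = (M *m (a *m b^T)) v' v) ->
  exists l, M *m a = l *: b.
Proof.
move=> /nz_entry [q [z bq]] Hs; rewrite [z]ord1 in bq.
exists ((M *m a) q 0 / b q 0); apply/matrixP => v y; rewrite [y]ord1 mxE.
have := Hs v q; rewrite !mulmxA !mxE !big_ord1 !mxE => E.
by rewrite mulrAC -E mulfK.
Qed.

Lemma pid1 (m : nat) : pid_mx 1 = (delta_mx 0 0 : 'M[F]_(n.+1, 1)) *m (delta_mx 0 0 : 'M[F]_(1, m.+1)).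
Proof.
apply/matrixP => i j; rewrite !mxE big_ord1 !mxE -!val_eqE /=.
case: i => [[|i] ?]; case: j => [[|j] ?] //=. all: by rewrite ?mulr1 ?mulr0 ?mul0r ?andbF.
Qed.

Lemma rank1_dec (M : 'M[F]_n.+1) : \rank M = 1%N ->
  exists a b : 'cV[F]_n.+1, [/\ a != 0, b != 0 & M = a *m b^T].
Proof.
move=> r1; have := mulmx_ebase M; rewrite r1 pid1 => E.
exists (col_ebase M *m delta_mx 0 0), ((delta_mx 0 0 *m row_ebase M)^T).
rewrite trmxK -mulmxA (mulmxA (delta_mx _ _)) mulmxA E; split => //.
  apply/eqP => a0; move: r1; rewrite -E !mulmxA a0 !mul0mx.
  by rewrite mxrank0.
apply/eqP => b0; move: r1; rewrite -E -!mulmxA -(trmxK (delta_mx _ _ *m row_ebase M)) b0.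
by rewrite trmx0 !mulmx0 mxrank0.
Qed.

Lemma complete (a : 'cV[F]_n.+1) : a != 0 ->
  exists X : 'M[F]_n.+1, X \in unitmx /\ X *m delta_mx 0 0 = a.
Proof.
move=> an0.
have r1 : \rank a = 1%N by rewrite -mxrank_tr rank_rV trmx_eq0 an0.
have := mulmx_ebase a; rewrite r1.
have -> : pid_mx 1 = (delta_mx 0 0 : 'M[F]_(n.+1, 1)).
  by rewrite (pid1 0) mul_delta_mx.
rewrite [row_ebase a]mx11_scalar -mulmxA mul_mx_scalar => E.
have u := row_ebase_unit a.
rewrite unitmxE [row_ebase a]mx11_scalar det_scalar expr1 in u.
exists ((row_ebase a 0 0) *: col_ebase a); split.
  by rewrite unitmxZ ?col_ebase_unit.
by rewrite -scalemxAl scalemxAr.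
Qed.
End Lin.
Section Transport.
Variable F : fieldType.
Variable n : nat.
Implicit Types (Y Z : 'M[F]_n).

Lemma Cf_transport Y Z (A0 A1 A2 : 'M[F]_n) :
  Cf (Y *m A0 *m Z) (Y *m A1 *m Z) (Y *m A2 *m Z) =
  (\det Z ^+ 2 * \det Y) *: (Y *m Cf A0 A1 A2 *m \adj Y).
Proof.
have eB A : Bf (Y *m A0 *m Z) (Y *m A *m Z) = \det Z *: (Y *m Bf A0 A *m \adj Y).
  rewrite /Bf !adjM -!mulmxA (mulmxA Z) mul_mx_adj mul_scalar_mx.
  by rewrite -!scalemxAr.
rewrite /Cf !eB -!scalemxAl -!scalemxAr !scalerA -scalerBr.
have E A B : Y *m A *m \adj Y *m (Y *m B *m \adj Y) = \det Y *: (Y *m (A *m B) *m \adj Y).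
  rewrite !mulmxA -(mulmxA _ (\adj Y)) mul_adj_mx mul_mx_scalar -!scalemxAl.
  by [].
rewrite !E -scalerBr scalerA -expr2 mulmxBr mulmxBl.
by [].
Qed.

Lemma unit_adj Y : Y \in unitmx -> \adj Y \in unitmx.
Proof.
move=> uY; have E : \adj Y = \det Y *: invmx Y.
  by rewrite -[LHS]mulmx1 -(mulmxV uY) mulmxA mul_adj_mx mul_scalar_mx.
by rewrite E unitmxZ ?unitmx_inv // unitfE -unitmxE.
Qed.

Lemma adj_transport_ne0 Y Z (A0 A1 A2 : 'M[F]_n) :
  Y \in unitmx -> Z \in unitmx -> \adj (Cf A0 A1 A2) != 0 ->
  \adj (Cf (Y *m A0 *m Z) (Y *m A1 *m Z) (Y *m A2 *m Z)) != 0.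
Proof.
move=> uY uZ; apply: contraNneq => E.
have s0 : \det Z ^+ 2 * \det Y != 0.
  by rewrite mulf_neq0 ?expf_neq0 // -unitfE -unitmxE.
move: E; rewrite Cf_transport adjZ !adjM => /eqP.
rewrite scalemx_eq0 expf_eq0 (negPf s0) andbF /= => /eqP E.
have uaY := unit_adj uY; have uaaY := unit_adj uaY.
apply/eqP; rewrite -(mulKmx uaaY (\adj (Cf A0 A1 A2))) -(mulmxK uaY (_ *m \adj (Cf A0 A1 A2))) -(mulmxA (\adj (\adj Y))) E.
by rewrite mul0mx mulmx0.
Qed.
End Transport.
Section Example.
Variable F : fieldType.
Definition Dst : 'M[F]_4 := diag_mx (\row_(i < 4) (i%:R)).
Definition Nst : 'M[F]_4 := \matrix_(i < 4, j < 4) ((j == i.+1 :> nat)%:R).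

Lemma Dst_e0 : Dst *m (delta_mx 0 0 : 'cV[F]_4) = 0.
Proof.
apply/matrixP => i j; rewrite !mxE big1 // => k _; rewrite !mxE.
case: (i =P k) => [<-|_]; last by rewrite mulr0n mul0r.
rewrite -val_eqE /=; case: (nat_of_ord i) => [|m] /=.
  by rewrite mulr0n mul0r.
by rewrite mulr0.
Qed.

Lemma Nst_e0 : Nst *m (delta_mx 0 0 : 'cV[F]_4) = 0.
Proof.
apply/matrixP => i j; rewrite !mxE big1 // => k _; rewrite !mxE.
rewrite -val_eqE /=; case: (nat_of_ord k) => [|m] /=.
  by rewrite mul0r.
by rewrite mulr0.
Qed.

Lemma Cst_entry (i j : 'I_4) :
  Cf 1%:M Dst Nst i j = ((i : nat)%:R - (j : nat)%:R) * ((j == i.+1 :> nat)%:R).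
Proof.
rewrite /Cf /Bf adj1 !mulmx1 /Dst mul_diag_mx mul_mx_diag !mxE.
by rewrite mulrBl [_ * j%:R]mulrC.
Qed.

Lemma adjCst : \adj (Cf 1%:M Dst Nst) != 0.
Proof.
apply/eqP => /matrixP /(_ 0 3); rewrite !mxE => E.
have M : row' 3 (col' 0 (Cf 1%:M Dst Nst)) = - 1%:M.
  apply/matrixP => p q; rewrite [LHS]mxE [LHS]mxE Cst_entry !mxE. rewrite /= /bump leq0n (leqNgt 3 p) ltn_ord /= add0n add1n eqSS.
  case: (p =P q) => [->|/eqP npq]; first by rewrite eqxx mulr1 mulrS /=; ring.
  rewrite (_ : (q == p :> nat) = false) ?mulr0 /=; first by rewrite oppr0.
  by apply/negbTE; rewrite val_eqE eq_sym.
move: E; rewrite /cofactor M -scaleN1r detZ det1 /=.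
by move=> /eqP; rewrite mulr1 -exprD -signr_odd /= oner_eq0.
Qed.
End Example.
Section Homog.
Variable N : nat.
Local Notation P := {mpoly CC[N]}.

Definition hmx (m k : nat) (d : nat) (M : 'M[P]_(m, k)) := forall i j, M i j \is d.-homog.

Lemma homog_bool (b : bool) : (b%:R : P) \is 0.-homog.
Proof. by case: b; rewrite ?dhomog1 ?rpred0. Qed.

Lemma hmx_mul m k l d1 d2 (A : 'M[P]_(m, k)) (B : 'M[P]_(k, l)) :
  hmx d1 A -> hmx d2 B -> hmx (d1 + d2) (A *m B).
Proof.
move=> hA hB i j; rewrite mxE; apply: rpred_sum => x _; exact: dhomogM.
Qed.

Lemma hmx_sub m k d (A B : 'M[P]_(m, k)) : hmx d A -> hmx d B -> hmx d (A - B).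
Proof. by move=> hA hB i j; rewrite !mxE; apply: rpredB. Qed.

Lemma prod_homog k d (F : 'I_k -> P) : (forall i, F i \is d.-homog) ->
  \prod_(i < k) F i \is (k * d).-homog.
Proof.
elim: k F => [|k IH] F hF; first by rewrite big_ord0 mul0n dhomog1.
rewrite big_ord_recr /= mulSn addnC; apply: dhomogM; last exact: hF.
exact: IH.
Qed.

Lemma det_homog m d (A : 'M[P]_m) : hmx d A -> \det A \is (m * d).-homog.
Proof.
move=> hA; rewrite /determinant; apply: rpred_sum => s _.
have hp := prod_homog (fun i => hA i ((s : {perm 'I_m}) i)).
by case: (odd_perm s); rewrite /= ?expr0 ?expr1 ?mul1r ?mulN1r ?rpredN.
Qed.

Lemma adj_homog m d (A : 'M[P]_m.+1) : hmx d A -> hmx (m * d) (\adj A).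
Proof.
move=> hA i j; rewrite mxE /cofactor.
have hm : hmx d (row' j (col' i A)) by move=> x y; rewrite !mxE; exact: hA.
have hp := det_homog hm. rewrite -signr_odd; case: (odd _); rewrite /= ?expr0 ?expr1 ?mul1r ?mulN1r ?rpredN //.
Qed.

Lemma delta_homog m k i j : hmx 0 (delta_mx i j : 'M[P]_(m, k)).
Proof. by move=> x y; rewrite mxE homog_bool. Qed.
End Homog.
Lemma line_poly N (P : {mpoly CC[N]}) (x y : 'I_N -> CC) :
  exists Q : {poly CC}, forall t, Q.[t] = meval (fun i => x i + y i * t) P.
Proof.
exists (mmap (polyC : {rmorphism CC -> {poly CC}}) (fun i => (x i)%:P + (y i)%:P * 'X) P) => t.
rewrite mevalE /mmap.
rewrite -[LHS]/(horner_eval t _) rmorph_sum; apply: eq_bigr => m _.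
rewrite rmorphM /mmap1 rmorph_prod /= horner_evalE hornerC.
congr (_ * _); apply: eq_bigr => i _; rewrite rmorphXn /= horner_evalE.
by rewrite hornerD hornerC hornerM hornerC hornerX.
Qed.

Lemma poly_zero_fun (Q R : {poly CC}) : R != 0 ->
  (forall t, R.[t] != 0 -> Q.[t] = 0) -> Q = 0.
Proof.
move=> Rn0 H.
have QR : Q * R = 0.
  apply/eqP; apply/negPn/negP => nz.
  pose rs := [seq (i%:R : CC) | i <- iota 0 (size (Q * R))].
  have allr : all (root (Q * R)) rs.
    apply/allP => t _; rewrite rootE hornerM.
    by have [->|/H->] := eqVneq R.[t] 0; rewrite ?mulr0 ?mul0r.
  have ur : uniq rs.
    rewrite map_inj_uniq ?iota_uniq // => a b /eqP.
    by rewrite eqr_nat => /eqP.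
  by have := max_poly_roots nz allr (ur : uniq rs); rewrite size_map size_iota ltnn.
by move/eqP: QR; rewrite mulf_eq0 (negPf Rn0) orbF => /eqP.
Qed.
Section Morph.
Variables (S T : comRingType) (f : {rmorphism S -> T}) (n : nat).
Lemma map_Bf (A0 A : 'M[S]_n) : map_mx f (Bf A0 A) = Bf (map_mx f A0) (map_mx f A).
Proof. by rewrite /Bf (map_mxM f) (map_mx_adj f). Qed.
Lemma map_Cf (A0 A1 A2 : 'M[S]_n) : map_mx f (Cf A0 A1 A2) = Cf (map_mx f A0) (map_mx f A1) (map_mx f A2).
Proof. by rewrite /Cf /Bf map_mxB !(map_mxM f) !(map_mx_adj f). Qed.
Lemma map_kf (A0 A1 A2 : 'M[S]_n) j : map_mx f (kf A0 A1 A2 j) = kf (map_mx f A0) (map_mx f A1) (map_mx f A2) j.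
Proof. by rewrite /kf (map_mxM f) (map_mx_adj f) map_Cf (map_delta_mx f). Qed.
Lemma map_hf (A0 A1 A2 : 'M[S]_n) i j : f (hf A0 A1 A2 i j) = hf (map_mx f A0) (map_mx f A1) (map_mx f A2) i j.
Proof. by rewrite /hf rmorphM -(det_map_mx f) -map_Cf -(map_mx_adj f) [in RHS]mxE. Qed.
Lemma map_Gf (A0 A1 A2 : 'M[S]_n) j w v : f (Gf A0 A1 A2 j w v) = Gf (map_mx f A0) (map_mx f A1) (map_mx f A2) j w v.
Proof.
by rewrite /Gf rmorphM -map_kf -(map_mx_adj f) -(map_mxM f) !mxE.
Qed.
End Morph.

Definition Xv (t : TIdx) : {mpoly CC[#|TIdx|]} := 'X_(enum_rank t).
Definition AX (r : 'I_3) : 'M[{mpoly CC[#|TIdx|]}]_4 := \matrix_(v < 4, w < 4) Xv ((r, v), w).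
Definition Amat (phi : TPoint) (r : 'I_3) : 'M[CC]_4 := \matrix_(v < 4, w < 4) phi ((r, v), w).

Lemma map_AX phi r : map_mx (meval (evT phi)) (AX r) = Amat phi r.
Proof. by apply/matrixP => v w; rewrite !mxE /Xv mevalXU /evT enum_rankK. Qed.

Lemma hmx_AX r : hmx 1 (AX r).
Proof. move=> v w; rewrite mxE /Xv dhomogX; apply/eqP; exact: mdeg1. Qed.

Definition Kset := ('I_4 * 'I_4)%type.
Definition hP (c : 'I_#|{: Kset}|) : {mpoly CC[#|TIdx|]} :=
  hf (AX 0) (AX 1) (AX 2) (enum_val c).1 (enum_val c).2.
Definition GP (c : 'I_#|{: Kset}|) (p : PIdx) : {mpoly CC[#|TIdx|]} :=
  Gf (AX 0) (AX 1) (AX 2) (enum_val c).2 p.1 p.2.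

Lemma hP_homog c : homog_of_deg 28 (hP c).
Proof.
rewrite /homog_of_deg -dhomogE /hP /hf.
have h0 := hmx_AX 0; have h1 := hmx_AX 1; have h2 := hmx_AX 2.
have hC : hmx 8 (Cf (AX 0) (AX 1) (AX 2)).
  have hB r : hmx 4 (Bf (AX 0) (AX r)) := hmx_mul (hmx_AX r) (adj_homog h0).
  exact: (hmx_sub (hmx_mul (hB 1) (hB 2)) (hmx_mul (hB 2) (hB 1))).
exact: (dhomogM (det_homog h0) (adj_homog hC _ _)).
Qed.

Lemma GP_homog c p : homog_of_deg 51 (GP c p).
Proof.
rewrite /homog_of_deg -dhomogE /GP /Gf.
have h0 := hmx_AX 0; have h1 := hmx_AX 1; have h2 := hmx_AX 2.
have hC : hmx 8 (Cf (AX 0) (AX 1) (AX 2)).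
  have hB r : hmx 4 (Bf (AX 0) (AX r)) := hmx_mul (hmx_AX r) (adj_homog h0).
  exact: (hmx_sub (hmx_mul (hB 1) (hB 2)) (hmx_mul (hB 2) (hB 1))).
have hk : hmx 24 (kf (AX 0) (AX 1) (AX 2) (enum_val c).2).
  rewrite /kf; apply: (hmx_mul (d2 := 0) (adj_homog hC)); exact: delta_homog.
apply: (dhomogM (d := 27)); last exact: hk.
exact: (hmx_mul (adj_homog h0) hk).
Qed.

Lemma composite_mx phi psi r v v' :
  composite phi psi r v v' = (Amat phi r *m psi_mx psi) v v'.
Proof. by rewrite /composite mxE; apply: eq_bigr => w _; rewrite !mxE. Qed.

Lemma sym_of (M : 'M[CC]_4) (a b : 'cV[CC]_4) mu : M *m a = mu *: b ->
  forall v v', (M *m (a *m b^T)) v v' = (M *m (a *m b^T)) v' v.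
Proof.
move=> E v v'; rewrite mulmxA E -scalemxAl !mxE !big_ord1 !mxE.
by rewrite [b v _ * _]mulrC.
Qed.

Lemma F1_dec phi psi : F1cone phi psi ->
  exists a b : 'cV[CC]_4, [/\ a != 0, b != 0, psi_mx psi = a *m b^T &
    forall r, exists l, Amat phi r *m a = l *: b].
Proof.
case=> _ [r1 fac]; have [a [b [an0 bn0 E]]] := rank1_dec r1.
exists a, b; split => // r; apply: sym_prop => // v v'.
by rewrite -E -!composite_mx fac.
Qed.

Lemma evh phi c : meval (evT phi) (hP c) =
  hf (Amat phi 0) (Amat phi 1) (Amat phi 2) (enum_val c).1 (enum_val c).2.
Proof. by rewrite /hP (map_hf (meval (evT phi))) !map_AX. Qed.

Lemma evG phi c p : meval (evT phi) (GP c p) =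
  Gf (Amat phi 0) (Amat phi 1) (Amat phi 2) (enum_val c).2 p.1 p.2.
Proof. by rewrite /GP (map_Gf (meval (evT phi))) !map_AX. Qed.


Definition Ast (r : 'I_3) : 'M[CC]_4 :=
  if r == 0 then 1%:M else if r == 1 then Dst CC else Nst CC.

Lemma Ast_e0 r : exists l, Ast r *m (delta_mx 0 0 : 'cV[CC]_4) = l *: delta_mx 0 0.
Proof.
rewrite /Ast; case: (r == 0); first by exists 1; rewrite mul1mx scale1r.
case: (r == 1); exists 0; by rewrite scale0r ?Dst_e0 ?Nst_e0.
Qed.

Lemma line_dense (P : {mpoly CC[#|PairIdx|]}) (U : TPoint -> PPoint -> Prop)
  (phi phi0 : TPoint) (psi : PPoint) (h : {mpoly CC[#|TIdx|]}) :
  (forall phi psi, U phi psi -> meval (evTP phi psi) P = 0) ->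
  meval (evT phi0) h != 0 ->
  (forall t, meval (evT (fun s => phi s + (phi0 s - phi s) * t)) h != 0 ->
     U (fun s => phi s + (phi0 s - phi s) * t) psi) ->
  meval (evTP phi psi) P = 0.
Proof.
move=> HU h0 Ht.
pose phit t := fun s => phi s + (phi0 s - phi s) * t.
have [Q HQ] := line_poly P (evTP phi psi)
  (fun i => match enum_val i with inl s => phi0 s - phi s | inr _ => 0 end).
have [R HR] := line_poly h (evT phi) (fun i => phi0 (enum_val i) - phi (enum_val i)).
have HQ' t : Q.[t] = meval (evTP (phit t) psi) P.
  rewrite HQ; apply: meval_eq => i; rewrite /evTP /phit.
  by case: (enum_val i) => // p; rewrite mul0r addr0.
have HR' t : R.[t] = meval (evT (phit t)) h by rewrite HR.
have Rn0 : R != 0.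
  have E1 : meval (evT phi0) h = R.[1].
    rewrite HR'; apply: meval_eq => i; by rewrite /evT /phit mulr1 addrC subrK.
  by apply: contraNneq h0 => R0; rewrite E1 R0 horner0.
have Qz : Q = 0.
  apply: (poly_zero_fun Rn0) => t Rt; rewrite HQ'; apply: HU; apply: Ht.
  by rewrite -HR'.
have := HQ' 0; rewrite Qz horner0 => ->.
by apply: meval_eq => i; rewrite /evTP /phit; case: (enum_val i) => // s; rewrite mulr0 addr0.
Qed.

Theorem mainTheorem7 : proj_birational_onto_image F1cone.
Proof.
exists #|{: Kset}|, hP, (fun _ => 28%N), (fun _ => 51%N), GP.
split; first exact: hP_homog.
split; first by move=> i p; exact: GP_homog.
split.
  move=> c phi psi Fpp; rewrite evh => hn0.
  have [a [b [an0 bn0 Epsi Hl]]] := F1_dec Fpp.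
  have [l0 e0] := Hl 0; have [l1 e1] := Hl 1; have [l2 e2] := Hl 2.
  have [cst [cn0 Hc]] := chart an0 bn0 e0 e1 e2 hn0.
  exists cst; split => // -[w v]; rewrite evG /=.
  by rewrite -Hc -Epsi mxE.
move=> P HU phi psi Fpp.
have [a [b [an0 bn0 Epsi Hl]]] := F1_dec Fpp.
have [X [uX eX]] := complete an0; have [Y [uY eY]] := complete bn0.
pose Mr r := Y *m Ast r *m invmx X.
pose phi0 : TPoint := fun s => Mr s.1.1 s.1.2 s.2.
have Aphi0 r : Amat phi0 r = Mr r by apply/matrixP => v w; rewrite mxE.
have HMa r : exists l, Mr r *m a = l *: b.
  have [l El] := Ast_e0 r; exists l.
  by rewrite /Mr -mulmxA -eX (mulKmx uX) -mulmxA El -scalemxAr eY.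
have M0 : Mr 0 = Y *m 1%:M *m invmx X by rewrite /Mr /Ast eqxx.
have M1 : Mr 1 = Y *m Dst CC *m invmx X by [].
have M2 : Mr 2 = Y *m Nst CC *m invmx X by [].
have uXi : invmx X \in unitmx by rewrite unitmx_inv.
have adjne : \adj (Cf (Mr 0) (Mr 1) (Mr 2)) != 0.
  by rewrite M0 M1 M2; apply: adj_transport_ne0 => //; exact: adjCst.
have [i [j hij]] := nz_entry adjne.
pose c0 : 'I_#|{: Kset}| := enum_rank ((i, j) : Kset).
have hc0 phi' : meval (evT phi') (hP c0) = hf (Amat phi' 0) (Amat phi' 1) (Amat phi' 2) i j.
  by rewrite evh enum_rankK.
apply: (line_dense (h := hP c0) (phi0 := phi0) HU).
  rewrite hc0 !Aphi0 /hf mulf_neq0 // M0 !det_mulmx det1 mulr1.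
  by rewrite mulf_neq0 // -unitfE -unitmxE.
move=> t Ht; split; last by exists c0.
split.
  move: Ht; rewrite hc0 /hf mulf_eq0 negb_or => /andP[dn0 _].
  have : Amat (fun s => phi s + (phi0 s - phi s) * t) 0 != 0.
    by apply/eqP => A0; rewrite A0 det0 eqxx in dn0.
  by move=> /nz_entry [v [w]]; rewrite mxE => nz; exists ((0, v), w).
split; first by case: Fpp => _ [].
move=> r v v'; rewrite !composite_mx Epsi.
have [l El] := Hl r; have [l' El'] := HMa r.
apply: (sym_of (mu := l + t * (l' - l))).
have -> : Amat (fun s => phi s + (phi0 s - phi s) * t) r = Amat phi r + t *: (Amat phi0 r - Amat phi r).
  by apply/matrixP => x y; rewrite !mxE mulrC.
rewrite mulmxDl -scalemxAl mulmxBl El Aphi0 El' -scalerBl scalerA -scalerDl.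
by [].
Qed.
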